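(* Let $\mathcal{D}$ be a liability category and let $\mathcal{L}$ be the liability sheaf on $\mathcal{H}_G$ of a liability network $N=(G,X,\lambda,\iota;\delta,\hat\alpha)$ in $\mathcal{D}$, where $G=(V,E,s,t)$ is acyclic, and let $r$ be the maximum length (in edges) of a directed path in $G$. Then $\Phi_*^{r+1}$ is constant on $\mathcal{G}_P=\mathrm{Hom}(1,P)$, with image a single global element $\mathbf{x}^*\in\mathrm{Fix}(\Phi_* )$; equivalently, $\mathcal{H}_G$ admits a unique clearing section (i.e. $\Gamma(\mathcal{H}_G;\mathcal{L})$ has exactly one element), computed by $r+1$ applications of $\Phi_*$ to any starting point.
   Context: A liability category is a category $\mathcal{D}$ with terminal object $1$, finite products and equalizers, a partial order on each $\mathrm{Hom}(1,P)$ preserved by postcomposition, a pullback-stable class $\mathcal{S}_P$ of constraint monomorphisms into each $P$, bound selectors $\beta_P:\mathrm{Hom}(1,P)\to\mathcal{S}_P$, and order isomorphisms $\mathrm{Hom}(1,\prod_iP_i)\cong\prod_i\mathrm{Hom}(1,P_i)$ (componentwise order) for finite families. A liability network in $\mathcal{D}$: finite directed graph $G=(V,E,s,t)$, payment objects $X_v$, liabilities $\lambda_e:1\to X_{s(e)}$, exogenous resources $\iota_v:1\to X_v$, distributors $\delta_e:X_{s(e)}\to X_{s(e)}^{\lambda_e}$ where $X_{s(e)}^{\lambda_e}$ is the domain of $\beta_{X_{s(e)}}(\lambda_e)$, aggregators $\hat\alpha_v:X_v\times\prod_{t(e)=v}X_{s(e)}^{\lambda_e}\to X_v$, and partial aggregators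 $\alpha_v=\hat\alpha_v\circ(\iota_v\times\mathrm{id}):\prod_{t(e)=v}X_{s(e)}^{\lambda_e}\to X_v$, an empty product being $1$. With $P=\prod_vX_v$, $B=\prod_eX_{s(e)}^{\lambda_e}$, $D:P\to B$ with components $\delta_e\circ\pi_{s(e)}$ and $A:B\to P$ with components $\alpha_v\circ\langle\pi_e\rangle_{t(e)=v}$, the clearing operator is $\Phi=A\circ D$; $\Phi_*(\mathbf{x})=\Phi\circ\mathbf{x}$ on $\mathrm{Hom}(1,P)$ and $\mathrm{Fix}(\Phi_* )$ is its fixed-point set. The liability hypergraph $\mathcal{H}_G$ has vertices $V\sqcup\{e^*:e\in E\}$ and hyperedges $h_v^\delta$ (source $\{v\}$, target $\{e^*:s(e)=v\}$) and $h_v^\alpha$ (empty source, target $\{e^*:t(e)=v\}\cup\{v\}$); the incidence category $\mathcal{I}(\mathcal{H}_G)$ has one non-identity arrow $h\to w$ per incidence and no composites. The liability sheaf has stalks $X_v$ at $v,h_v^\delta$, $X_{s(e)}^{\lambda_e}$ at $e^*$, $\prod_{t(e)=v}X_{s(e)}^{\lambda_e}$ at $h_v^\alpha$, restrictions $\mathrm{id},\delta_e,\pi_e,\alpha_v$. $\Gamma(\mathcal{H}_G;\mathcal{L})=\mathrm{Hom}(1,\lim_{\mathcal{I}(\mathcal{H}_G)}\mathcal{L})$; its elements are the clearing sections. *)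

(* Defs.v *)
From mathcomp Require Import all_boot.
Set Implicit Arguments. Unset Strict Implicit. Unset Printing Implicit Defensive.

Record Category := {
  Ob :> Type;
  Hom : Ob -> Ob -> Type;
  idm : forall A, Hom A A;
  mcomp : forall A B C, Hom B C -> Hom A B -> Hom A C;
  compA : forall A B C D (h : Hom C D) (g : Hom B C) (f : Hom A B),
      mcomp h (mcomp g f) = mcomp (mcomp h g) f;
  comp1m : forall A B (f : Hom A B), mcomp (idm B) f = f;
  compm1 : forall A B (f : Hom A B), mcomp f (idm A) = f }.
Arguments Hom {_}.
Arguments idm {_}.
Arguments mcomp {_ _ _ _} _ _.

Definition mono (C : Category) (A B : C) (m : Hom A B) :=
  forall (Z : C) (f g : Hom Z A), mcomp m f = mcomp m g -> f = g.

Definition is_pullback (C : Category) (P Q P' Q' : C)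
    (m : Hom Q P) (f : Hom P' P) (m' : Hom Q' P') (f' : Hom Q' Q) :=
  mcomp m f' = mcomp f m' /\
  forall (Z : C) (a : Hom Z Q) (b : Hom Z P'), mcomp m a = mcomp f b ->
    exists! u : Hom Z Q', mcomp f' u = a /\ mcomp m' u = b.

(* Liability categories.  Finite products are products of arbitrary
   finite families (indexed by a finType); binary products are the
   products of families indexed by bool. *)
Unset Implicit Arguments.
Record LiabilityCat := {
  lcat :> Category;
  term : lcat;
  bang : forall A : lcat, Hom A term;
  bang_uniq : forall (A : lcat) (f : Hom A term), f = bang A;
  iprod : forall I : finType, (I -> lcat) -> lcat;
  iproj : forall (I : finType) (F : I -> lcat) (i : I), Hom (iprod I F) (F i);
  ituple : forall (I : finType) (F : I -> lcat) (Y : lcat),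
      (forall i : I, Hom Y (F i)) -> Hom Y (iprod I F);
  iproj_tuple : forall (I : finType) (F : I -> lcat) (Y : lcat)
      (f : forall i : I, Hom Y (F i)) (i : I),
      mcomp (iproj I F i) (ituple I F Y f) = f i;
  ituple_uniq : forall (I : finType) (F : I -> lcat) (Y : lcat)
      (f : forall i : I, Hom Y (F i)) (u : Hom Y (iprod I F)),
      (forall i, mcomp (iproj I F i) u = f i) -> u = ituple I F Y f;
  eqz : forall A B : lcat, Hom A B -> Hom A B -> lcat;
  eqm : forall (A B : lcat) (f g : Hom A B), Hom (eqz A B f g) A;
  eqm_eq : forall (A B : lcat) (f g : Hom A B),
      mcomp f (eqm A B f g) = mcomp g (eqm A B f g);
  eqz_univ : forall (A B : lcat) (f g : Hom A B) (Z : lcat) (h : Hom Z A),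
      mcomp f h = mcomp g h -> exists! u : Hom Z (eqz A B f g), mcomp (eqm A B f g) u = h;
  gle : forall P : lcat, Hom term P -> Hom term P -> Prop;
  gle_refl : forall (P : lcat) (x : Hom term P), gle P x x;
  gle_trans : forall (P : lcat) (x y z : Hom term P), gle P x y -> gle P y z -> gle P x z;
  gle_anti : forall (P : lcat) (x y : Hom term P), gle P x y -> gle P y x -> x = y;
  gle_post : forall (P Q : lcat) (f : Hom P Q) (x y : Hom term P),
      gle P x y -> gle Q (mcomp f x) (mcomp f y);
  constr : forall P Q : lcat, Hom Q P -> Prop;
  constr_mono : forall (P Q : lcat) (m : Hom Q P), constr P Q m -> mono m;
  constr_pb : forall (P Q : lcat) (m : Hom Q P), constr P Q m ->
      forall (P' : lcat) (f : Hom P' P), exists (Q' : lcat) (m' : Hom Q' P') (f' : Hom Q' Q),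
        is_pullback m f m' f' /\ constr P' Q' m';
  beta : forall P : lcat, Hom term P -> {Q : lcat & {m : Hom Q P | constr P Q m}};
  iprod_order : forall (I : finType) (F : I -> lcat) (x y : Hom term (iprod I F)),
      gle (iprod I F) x y <-> forall i, gle (F i) (mcomp (iproj I F i) x) (mcomp (iproj I F i) y) }.

Set Implicit Arguments.
Arguments term {_}.
Arguments bang {_}.
Arguments iprod {_ _}.
Arguments iproj {_ _ _}.
Arguments ituple {_ _ _ _}.
Arguments beta {_ _}.

Definition bprod (L : LiabilityCat) (X Y : L) : L :=
  iprod (fun b : bool => if b then X else Y).

Definition bpair (L : LiabilityCat) (Z X Y : L) (f : Hom Z X) (g : Hom Z Y)
  : Hom Z (bprod X Y) :=
  ituple (fun b : bool => if b as b' return Hom Z (if b' then X else Y) then f else g).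

Record Network (L : LiabilityCat) (V E : finType) (s t : E -> V) := {
  Xv : V -> L;
  lam : forall e : E, Hom term (Xv (s e));
  iota : forall v : V, Hom term (Xv v);
  delta : forall e : E, Hom (Xv (s e)) (projT1 (beta (lam e)));
  alphahat : forall v : V,
      Hom (bprod (Xv v)
                 (iprod (fun e : {e : E | t e == v} => projT1 (beta (lam (val e))))))
          (Xv v) }.

Section NetworkDefs.
Context (L : LiabilityCat) (V E : finType) (s t : E -> V) (N : Network L s t).

Definition Xl (e : E) : L := projT1 (beta (lam N e)).
Definition Bin (v : V) : L := iprod (fun e : {e : E | t e == v} => Xl (val e)).

Definition alpha (v : V) : Hom (Bin v) (Xv N v) :=
  mcomp (alphahat N v) (bpair (mcomp (iota N v) (bang (Bin v))) (idm (Bin v))).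

Definition PP : L := iprod (Xv N).
Definition BB : L := iprod Xl.

Definition Dmap : Hom PP BB :=
  ituple (fun e : E => mcomp (delta N e) (iproj (F := Xv N) (s e))).

Definition Amap : Hom BB PP :=
  ituple (fun v : V => mcomp (alpha v)
     (ituple (fun e : {e : E | t e == v} => iproj (F := Xl) (val e)))).

Definition Phi : Hom PP PP := mcomp Amap Dmap.
Definition Phistar (x : Hom term PP) : Hom term PP := mcomp Phi x.

End NetworkDefs.

Inductive IObj (V E : Type) :=
  | IVtx of V
  | IEstar of E      (* vertex e^* *)
  | IHdelta of V     (* hyperedge h_v^delta *)
  | IHalpha of V.    (* hyperedge h_v^alpha *)

Inductive IArr (V E : Type) :=
  | ADv of V
  | ADe of E
  | AAe of E
  | AAv of V.

Section Incidence.
Context (V E : Type) (s t : E -> V).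

Definition isrc (a : IArr V E) : IObj V E :=
  match a with
  | ADv v => IHdelta E v
  | ADe e => IHdelta E (s e)
  | AAe e => IHalpha E (t e)
  | AAv v => IHalpha E v
  end.

Definition itgt (a : IArr V E) : IObj V E :=
  match a with
  | ADv v => IVtx E v
  | ADe e => IEstar V e
  | AAe e => IEstar V e
  | AAv v => IVtx E v
  end.
End Incidence.

Section Sheaf.
Context (L : LiabilityCat) (V E : finType) (s t : E -> V) (N : Network L s t).

Definition stalk (o : IObj V E) : L :=
  match o with
  | IVtx v => Xv N v
  | IEstar e => Xl N e
  | IHdelta v => Xv N v
  | IHalpha v => Bin N v
  end.

Definition restr (a : IArr V E) : Hom (stalk (isrc s t a)) (stalk (itgt a)) :=
  match a as a0 return Hom (stalk (isrc s t a0)) (stalk (itgt a0)) with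
  | ADv v => idm (Xv N v)
  | ADe e => delta N e
  | AAe e => iproj (F := fun e' : {e' : E | t e' == t e} => Xl N (val e'))
                   (exist (fun e' => t e' == t e) e (eqxx (t e)))
  | AAv v => alpha N v
  end.
End Sheaf.

(* Limit cone of a diagram over a category whose only arrows are the
   identities and the given arrows (no composites). *)
Definition is_limit (C : Category) (O A : Type) (src tgt : A -> O)
    (F : O -> C) (Fm : forall a, Hom (F (src a)) (F (tgt a)))
    (Lim : C) (proj : forall o, Hom Lim (F o)) : Prop :=
  (forall a, mcomp (Fm a) (proj (src a)) = proj (tgt a)) /\
  (forall (Y : C) (c : forall o, Hom Y (F o)),
      (forall a, mcomp (Fm a) (c (src a)) = c (tgt a)) ->
      exists! u : Hom Y Lim, forall o, mcomp (proj o) u = c o).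

Definition dpath (V : eqType) (E : Type) (s t : E -> V) (p : seq E) : bool :=
  sorted (fun e e' => t e == s e') p.

Definition acyclic (V : eqType) (E : Type) (s t : E -> V) : Prop :=
  forall (e : E) (p : seq E), dpath s t (e :: p) -> t (last e p) != s e.

Definition max_path_length (V : eqType) (E : Type) (s t : E -> V) (r : nat) : Prop :=
  (exists p : seq E, dpath s t p /\ size p = r) /\
  (forall p : seq E, dpath s t p -> size p <= r).

Arguments Phistar {L V E s t} N x.
Arguments Phi {L V E s t} N.
Arguments restr {L V E s t} N a.
Arguments stalk {L V E s t} N o.
Arguments is_limit {C O A} src tgt F Fm Lim proj.

(* Main.v *)
From Pilot Require Import Defs.
From mathcomp Require Import all_boot.
Definition cA := Pilot.Defs.compA.

Lemma gl_ext (L : LiabilityCat) (I : finType) (F : I -> L) (Y : L)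
  (x y : Hom Y (iprod F)) :
  (forall i, mcomp (iproj i) x = mcomp (iproj i) y) -> x = y.
Proof.
move=> H.
rewrite (ituple_uniq L I F Y (fun i => mcomp (iproj i) y) x H).
symmetry; exact: ituple_uniq.
Qed.

Section Net.
Context (L : LiabilityCat) (V E : finType) (s t : E -> V) (N : Network L s t).

Lemma Phi_comp v (x : Hom term (PP N)) :
  mcomp (iproj v) (Phistar N x) =
  mcomp (alpha N v) (ituple (F := fun e' : {e | t e == v} => Xl N (val e'))
     (fun e' => mcomp (delta N (val e')) (mcomp (iproj (s (val e'))) x))).
Proof.
rewrite /Phistar /Phi /Amap cA cA iproj_tuple -!cA.
rewrite (_ : mcomp (ituple _) (mcomp (Dmap N) x) = ituple (F := fun e' : {e | t e == v} => Xl N (val e'))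
     (fun e' => mcomp (delta N (val e')) (mcomp (iproj (s (val e'))) x))) //.
apply: gl_ext => e'.
rewrite iproj_tuple cA iproj_tuple cA /Dmap iproj_tuple -cA //.
Qed.

Lemma depth k : forall v,
  (forall e p, dpath s t (e :: p) -> t (last e p) = v -> size (e :: p) <= k) ->
  forall x y, mcomp (iproj v) (iter k.+1 (Phistar N) x) =
              mcomp (iproj v) (iter k.+1 (Phistar N) y).
Proof.
elim: k => [|k IH] v Hv x y.
  rewrite /= !Phi_comp; congr (mcomp _ _); apply: gl_ext => [[e H]].
  have := Hv e [::] erefl (eqP H); by [].
rewrite iterS [in RHS]iterS !Phi_comp; congr (mcomp _ _); apply: gl_ext => [[e H]].
rewrite !iproj_tuple /=; congr (mcomp _ _); apply: IH => e0 p Hp Hl.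
have := Hv e0 (rcons p e).
rewrite /dpath /= rcons_path last_rcons size_rcons /=.
rewrite /dpath /= in Hp; rewrite Hp Hl eqxx (eqP H) => /(_ erefl erefl); by [].
Qed.

End Net.

Theorem mainTheorem8 (L : LiabilityCat) (V E : finType) (s t : E -> V)
    (N : Network L s t) (r : nat) :
  acyclic s t -> max_path_length s t r ->
  exists xstar : Hom term (PP N),
    (forall x : Hom term (PP N), iter r.+1 (Phistar N) x = xstar) /\
    Phistar N xstar = xstar /\
    (forall (Lim : L) (proj : forall o : IObj V E, Hom Lim (stalk N o)),
       is_limit (isrc s t) (@itgt V E) (stalk N) (restr N) Lim proj ->
       (exists sigma : Hom term Lim,
          forall v : V, mcomp (proj (IVtx E v)) sigma = mcomp (iproj v) xstar) /\
       (forall sigma1 sigma2 : Hom term Lim, sigma1 = sigma2)).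
Proof.
move=> _ [_ Hr].
have Hconst : forall x y : Hom term (PP N),
    iter r.+1 (Phistar N) x = iter r.+1 (Phistar N) y.
  move=> x y; apply: gl_ext => v; apply: depth => e p Hp _; exact: Hr.
pose x0 : Hom term (PP N) := ituple (Pilot.Defs.iota N).
exists (iter r.+1 (Phistar N) x0).
have Hfix : Phistar N (iter r.+1 (Phistar N) x0) = iter r.+1 (Phistar N) x0.
  by rewrite -iterS iterSr (Hconst (Phistar N x0) x0).
split; first by move=> x; exact: Hconst.
split; first exact: Hfix.
set xs := iter r.+1 (Phistar N) x0.
have Hfx : Phistar N xs = xs := Hfix.
move=> Lim proj [Hcone Huniv].
split.
  pose c := fun o => match o return Hom term (stalk N o) with
    | IVtx v => mcomp (iproj v) xs
    | IEstar e => mcomp (delta N e) (mcomp (iproj (s e)) xs)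
    | IHdelta v => mcomp (iproj v) xs
    | IHalpha v => ituple (F := fun e' : {e | t e == v} => Xl N (val e'))
        (fun e' => mcomp (delta N (val e')) (mcomp (iproj (s (val e'))) xs))
    end.
  have Hc : forall a, mcomp (restr N a) (c (isrc s t a)) = c (itgt a).
    case=> [v|e|e|v] /=.
    - by rewrite comp1m.
    - by [].
    - pose proof (@iproj_tuple L _ (fun e0 : {e0 | t e0 == t e} => Xl N (val e0)) term (fun e0 => mcomp (delta N (val e0)) (mcomp (iproj (s (val e0))) xs)) (exist _ e (eqxx (t e)))) as HH; exact HH.
    - symmetry; rewrite -{1}Hfx Phi_comp; reflexivity.
  have [u [Hu _]] := Huniv term c Hc.
  by exists u => v; apply: (Hu (IVtx E v)).
have HD : forall (sg : Hom term Lim) v,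
    mcomp (proj (IHdelta E v)) sg = mcomp (proj (IVtx E v)) sg.
  move=> sg v; rewrite -(Hcone (ADv E v)) /= -cA comp1m //.
have HA : forall (sg : Hom term Lim) w e (H : t e == w),
    mcomp (iproj (F := fun e0 : {e0 | t e0 == w} => Xl N (val e0))
             (exist _ e H)) (mcomp (proj (IHalpha E w)) sg)
    = mcomp (proj (IEstar V e)) sg.
  move=> sg w e H; have E0 := eqP H; subst w.
  rewrite (eq_irrelevance H (eqxx _)) cA.
  by rewrite -(Hcone (AAe V e)).
have HB : forall (sg : Hom term Lim) v,
    mcomp (proj (IHalpha E v)) sg =
    ituple (F := fun e' : {e | t e == v} => Xl N (val e'))
      (fun e' => mcomp (delta N (val e')) (mcomp (proj (IVtx E (s (val e')))) sg)).
  move=> sg v; apply: gl_ext => [[e H]].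
  rewrite iproj_tuple HA -(Hcone (ADe V e)) /= -cA HD //.
have Hx : forall sg : Hom term Lim,
    ituple (F := Xv N) (fun v => mcomp (proj (IVtx E v)) sg) = xs.
  move=> sg.
  set xg := ituple _.
  have Fx : Phistar N xg = xg.
    apply: gl_ext => v; rewrite Phi_comp /xg iproj_tuple.
    rewrite -(Hcone (AAv E v)) /= -cA; congr (mcomp _ _).
    symmetry; apply: gl_ext => [[e H]]. rewrite HA iproj_tuple /= iproj_tuple -(Hcone (ADe V e)) /= -cA HD //.
  have : iter r.+1 (Phistar N) xg = xg.
    elim: r.+1 => //= n ->; exact: Fx.
  by move=> <-; apply: Hconst.
have HV : forall (sg1 sg2 : Hom term Lim) (v : V),
    mcomp (proj (IVtx E v)) sg1 = mcomp (proj (IVtx E v)) sg2.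
  move=> sg1 sg2 v.
  have := congr1 (fun z => mcomp (iproj v) z) (etrans (Hx sg1) (esym (Hx sg2))).
  by rewrite /= !iproj_tuple.
move=> sg1 sg2.
have HE : forall e, mcomp (proj (IEstar V e)) sg1 = mcomp (proj (IEstar V e)) sg2.
  move=> e; rewrite -(Hcone (ADe V e)) /= -!cA !HD (HV sg1 sg2) //.
have Hall : forall o, mcomp (proj o) sg1 = mcomp (proj o) sg2.
  case=> [v|e|v|v].
  - exact: HV.
  - exact: HE.
  - rewrite !HD; exact: HV.
  - apply: gl_ext => [[e H]]; rewrite !HA; exact: HE.
have Hc : forall a, mcomp (restr N a) ((fun o => mcomp (proj o) sg1) (isrc s t a))
                    = (fun o => mcomp (proj o) sg1) (itgt a).
  by move=> a /=; rewrite cA Hcone.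
have [u [_ Hu]] := Huniv term (fun o => mcomp (proj o) sg1) Hc.
rewrite -(Hu sg1) //; apply: Hu => o; by rewrite Hall.
Qed.
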